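(* Let $H$ be the graph on vertex set $\{0,1,\dots,10\}$ in which $i,j$ are adjacent iff $1\le|i-j|\le 3$. Suppose the edges of $H$ are colored red/blue with no red cycle of length $3$, $4$ or $5$, and suppose at least one of the edges $\{0,1\},\{0,2\},\{0,3\}$ is blue. Then there exist $k\in\{1,\dots,9\}$ and a blue path $P_B$ in $H[\{0,\dots,k\}]$ with endpoints $0$ and $k$ such that at least one edge $\{k,k+j\}$ with $j\in\{1,2,3\}$ and $k+j\le 10$ is blue, and \[\frac{|V(P_B)\cap\{1,\dots,k\}|}{k}\ge \frac47.\] *)

(* Defs.v *)
From mathcomp Require Import all_boot.
Set Implicit Arguments. Unset Strict Implicit. Unset Printing Implicit Defensive.

Definition distn (i j : nat) : nat := maxn i j - minn i j.

Definition adjH (i j : nat) : bool :=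
  [&& i <= 10, j <= 10, 1 <= distn i j & distn i j <= 3].

(* A red/blue edge colouring is a symmetric function c : nat -> nat -> bool,
   c i j = true meaning the edge {i,j} is BLUE, false meaning RED
   (only the values on edges of H matter). *)
Definition symmetric_col (c : nat -> nat -> bool) : Prop :=
  forall i j, c i j = c j i.

Definition red_edge (c : nat -> nat -> bool) : rel nat :=
  fun i j => adjH i j && ~~ c i j.

Definition blue_edge (c : nat -> nat -> bool) : rel nat :=
  fun i j => adjH i j && c i j.

Definition red_cycle (c : nat -> nat -> bool) (s : seq nat) : bool :=
  uniq s && cycle (red_edge c) s.

Definition no_red_C345 (c : nat -> nat -> bool) : Prop :=
  forall s : seq nat, 3 <= size s <= 5 -> ~~ red_cycle c s.

Definition blue_path_0k (c : nat -> nat -> bool) (k : nat) (p : seq nat) : bool :=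
  [&& uniq (0 :: p), all (fun x => x <= k) (0 :: p),
      path (blue_edge c) 0 p & last 0 p == k].

(* Main.v *)
Require Import Defs.
From mathcomp Require Import all_boot.

Definition Elist : seq (nat * nat) := [:: (0,1); (0,2); (1,2); (0,3); (1,3); (2,3); (1,4); (2,4); (3,4); (2,5); (3,5); (4,5); (3,6); (4,6); (5,6); (4,7); (5,7); (6,7); (5,8); (6,8); (7,8); (6,9); (7,9); (8,9); (7,10); (8,10); (9,10)].

Definition cycs : seq (seq nat) := [:: [:: 0; 1; 2];
 [:: 0; 1; 3];
 [:: 1; 2; 3];
 [:: 1; 2; 4];
 [:: 1; 3; 4];
 [:: 2; 3; 4];
 [:: 2; 3; 5];
 [:: 2; 4; 5];
 [:: 3; 4; 5];
 [:: 3; 4; 6];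
 [:: 3; 5; 6];
 [:: 4; 5; 6];
 [:: 4; 5; 7];
 [:: 4; 6; 7];
 [:: 5; 6; 7];
 [:: 7; 8; 9];
 [:: 0; 1; 2; 3];
 [:: 0; 1; 3; 2];
 [:: 0; 1; 4; 2];
 [:: 0; 1; 4; 3];
 [:: 0; 2; 1; 3];
 [:: 1; 2; 3; 4];
 [:: 1; 2; 4; 3];
 [:: 1; 2; 5; 3];
 [:: 1; 2; 5; 4];
 [:: 1; 3; 2; 4];
 [:: 1; 3; 5; 4];
 [:: 1; 3; 6; 4];
 [:: 2; 3; 4; 5];
 [:: 2; 3; 5; 4];
 [:: 2; 3; 6; 4];
 [:: 2; 3; 6; 5];
 [:: 2; 4; 3; 5];
 [:: 3; 5; 4; 6];
 [:: 4; 5; 8; 6];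
 [:: 4; 5; 8; 7];
 [:: 4; 6; 5; 7];
 [:: 4; 6; 8; 7];
 [:: 4; 6; 9; 7];
 [:: 0; 1; 2; 4; 3];
 [:: 0; 1; 2; 5; 3];
 [:: 0; 1; 3; 4; 2];
 [:: 0; 1; 3; 5; 2];
 [:: 0; 1; 4; 2; 3];
 [:: 0; 1; 4; 3; 2];
 [:: 0; 1; 4; 5; 2];
 [:: 1; 2; 3; 5; 4];
 [:: 1; 2; 3; 6; 4];
 [:: 1; 2; 5; 3; 4];
 [:: 1; 2; 5; 6; 4];
 [:: 1; 2; 5; 7; 4];
 [:: 1; 3; 2; 5; 4];
 [:: 1; 3; 5; 6; 4];
 [:: 1; 3; 5; 7; 4];
 [:: 1; 3; 6; 5; 4];
 [:: 2; 3; 6; 4; 5]].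

Definition wits : seq (nat * seq nat * nat) := [:: (1, [:: 1], 1);
 (1, [:: 1], 2);
 (1, [:: 1], 3);
 (3, [:: 2; 1; 3], 1);
 (3, [:: 2; 1; 3], 2);
 (3, [:: 2; 1; 3], 3);
 (3, [:: 2; 3], 1);
 (3, [:: 2; 3], 2);
 (4, [:: 2; 1; 4], 1);
 (4, [:: 2; 1; 4], 2);
 (4, [:: 2; 1; 4], 3);
 (4, [:: 2; 3; 1; 4], 1);
 (4, [:: 3; 1; 2; 4], 1);
 (4, [:: 3; 1; 2; 4], 2);
 (4, [:: 3; 1; 2; 4], 3);
 (4, [:: 3; 1; 4], 1);
 (4, [:: 3; 1; 4], 2);
 (4, [:: 3; 1; 4], 3);
 (4, [:: 3; 2; 1; 4], 1);
 (4, [:: 3; 2; 1; 4], 2);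
 (4, [:: 3; 2; 1; 4], 3);
 (4, [:: 3; 2; 4], 1);
 (4, [:: 3; 2; 4], 2);
 (5, [:: 2; 1; 4; 3; 5], 1);
 (5, [:: 2; 4; 1; 3; 5], 1);
 (5, [:: 2; 4; 3; 5], 1);
 (5, [:: 2; 4; 3; 5], 2);
 (5, [:: 2; 4; 5], 1);
 (5, [:: 2; 4; 5], 2);
 (5, [:: 3; 1; 2; 5], 1);
 (5, [:: 3; 1; 4; 2; 5], 1);
 (5, [:: 3; 2; 5], 1);
 (5, [:: 3; 4; 1; 2; 5], 1);
 (6, [:: 2; 4; 3; 6], 1);
 (6, [:: 2; 5; 3; 4; 6], 1);
 (6, [:: 2; 5; 3; 6], 1);
 (7, [:: 3; 5; 6; 7], 1);
 (7, [:: 3; 5; 6; 7], 2);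
 (7, [:: 3; 6; 5; 7], 1);
 (7, [:: 3; 6; 5; 7], 2);
 (8, [:: 3; 5; 7; 6; 8], 1);
 (8, [:: 3; 6; 7; 5; 8], 1)].

Definition pc (a : seq bool) (i j : nat) : option bool :=
  let e := (minn i j, maxn i j) in
  if (e \in Elist) && (index e Elist < size a)
  then Some (nth false a (index e Elist)) else None.

Definition agree (c : nat -> nat -> bool) (a : seq bool) :=
  forall n, n < size a ->
    nth false a n = c (nth (0,0) Elist n).1 (nth (0,0) Elist n).2.

Definition redE a : rel nat := fun i j => adjH i j && (pc a i j == Some false).
Definition blueE a : rel nat := fun i j => adjH i j && (pc a i j == Some true).

Definition bad a := has (fun s => [&& 3 <= size s <= 5, uniq s & cycle (redE a) s]) cycs.

Definition okw a := has (fun w : nat * seq nat * nat => let: (k, p, j) := w in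
  [&& 1 <= k <= 9, uniq (0 :: p), all (fun x => x <= k) (0 :: p),
      path (blueE a) 0 p, last 0 p == k, 1 <= j <= 3, k + j <= 10,
      pc a k (k + j) == Some true &
      4 * k <= 7 * count (fun x => 1 <= x <= k) (0 :: p)]) wits.

Definition hypfail (a : seq bool) :=
  (3 < size a) && ~~ (nth false a 0 || nth false a 1 || nth false a 3).

Fixpoint search (f : nat) (a : seq bool) : bool :=
  if hypfail a then true else if bad a then true else if okw a then true else
  if f is f'.+1 then (if search f' (rcons a true) then search f' (rcons a false) else false)
  else false.

Lemma search_ok : search 27 [::].
Proof. vm_compute. reflexivity. Qed.

Definition G (c : nat -> nat -> bool) : Prop :=
  exists k : nat, exists p : seq nat,
    [/\ 1 <= k <= 9,
        blue_path_0k c k p,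
        (exists2 j : nat, 1 <= j <= 3 & (k + j <= 10) && c k (k + j))
      & 4 * k <= 7 * count (fun x => 1 <= x <= k) (0 :: p)].

Lemma pc_sound c a i j b : symmetric_col c -> agree c a -> pc a i j = Some b -> c i j = b.
Proof.
move=> sym ag; rewrite /pc; case: ifP => // /andP[inE lt] [<-].
rewrite ag // nth_index //=.
rewrite /minn /maxn; case: ltnP => h //.
Qed.

Lemma redE_sound c a i j : symmetric_col c -> agree c a -> redE a i j -> red_edge c i j.
Proof.
move=> sym ag /andP[h /eqP e]; rewrite /red_edge h (pc_sound _ _ _ _ _ sym ag e) //.
Qed.

Lemma blueE_sound c a i j : symmetric_col c -> agree c a -> blueE a i j -> blue_edge c i j.
Proof.
move=> sym ag /andP[h /eqP e]; rewrite /blue_edge h (pc_sound _ _ _ _ _ sym ag e) //.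
Qed.

Lemma checks_sound c a : symmetric_col c -> no_red_C345 c -> (c 0 1 || c 0 2 || c 0 3) ->
  agree c a -> hypfail a || bad a || okw a -> G c.
Proof.
move=> sym nr hc ag /orP[/orP[|]|].
- case/andP=> sz; rewrite (ag 0) ?(ag 1) ?(ag 3) //=; last by apply: leq_trans sz.
  + by rewrite hc.
  + by apply: leq_trans sz.
- case/hasP=> s _ /andP[sz /andP[u cy]]; exfalso.
  have := nr s sz; rewrite /red_cycle u /=.
  rewrite (sub_cycle _ cy) // => x y; exact: redE_sound.
- case/hasP=> [[[k p] j]] _ /andP[hk /andP[u /andP[al /andP[pth /andP[lst /andP[hj /andP[hkj /andP[e hcnt]]]]]]]].
  exists k, p; split => //.
    rewrite /blue_path_0k u al lst (sub_path _ pth) // => x y; exact: blueE_sound.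
  exists j => //; rewrite hkj (pc_sound _ _ _ _ _ sym ag (eqP e)) //.
Qed.

Lemma search_sound c : symmetric_col c -> no_red_C345 c -> (c 0 1 || c 0 2 || c 0 3) ->
  forall f a, agree c a -> search f a -> G c.
Proof.
move=> sym nr hc; elim=> [|f IH] a ag /=.
  case: ifP => [h _|_]; first by apply: (checks_sound _ _ sym nr hc ag); rewrite h.
  case: ifP => [h _|_]; first by apply: (checks_sound _ _ sym nr hc ag); rewrite h orbT.
  case: ifP => [h _|_] //; first by apply: (checks_sound _ _ sym nr hc ag); rewrite h orbT.
case: ifP => [h _|_]; first by apply: (checks_sound _ _ sym nr hc ag); rewrite h.
case: ifP => [h _|_]; first by apply: (checks_sound _ _ sym nr hc ag); rewrite h orbT.
case: ifP => [h _|_]; first by apply: (checks_sound _ _ sym nr hc ag); rewrite h orbT.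
have agr b : b = c (nth (0,0) Elist (size a)).1 (nth (0,0) Elist (size a)).2 ->
    agree c (rcons a b).
  move=> -> n; rewrite size_rcons ltnS leq_eqVlt => /orP[/eqP->|lt];
    rewrite nth_rcons ?ltnn ?eqxx //; rewrite lt; exact: ag.
case Eb: (c (nth (0,0) Elist (size a)).1 (nth (0,0) Elist (size a)).2).
  case: ifP => // h _; apply: (IH (rcons a true)) => //; exact: agr.
case: ifP => // _ h; apply: (IH (rcons a false)) => //; exact: agr.
Qed.

Theorem lemma2p2 (c : nat -> nat -> bool) :
  symmetric_col c ->
  no_red_C345 c ->
  (c 0 1 || c 0 2 || c 0 3) ->
  exists k : nat, exists p : seq nat,
    [/\ 1 <= k <= 9,
        blue_path_0k c k p,
        (exists2 j : nat, 1 <= j <= 3 & (k + j <= 10) && c k (k + j))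
      & 4 * k <= 7 * count (fun x => 1 <= x <= k) (0 :: p)].
Proof.
move=> sym nr hc; apply: (search_sound _ sym nr hc 27 [::]); [by move=> n | exact: search_ok].
Qed.
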